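(* Let $T$ be a tree with colour classes $A$ and $B$ such that $|A|\le |B|$ and $\delta(A)=\min\{d_T(x):x\in A\}\ge 2$. Then: (i) $\beta(T)=|A|$; (ii) $\min\{\beta(T'):T'\in\mathcal{H}(T)\}\ge |A|$; (iii) for every $m\ge 1$, the graph $K_{|A|-1}\vee K_m^c$ contains no member of $\mathcal{H}(T)$ as a subgraph.
   Context: $\beta(G)$ is the (vertex) covering number of $G$. $K_m^c$ is the empty graph on $m$ vertices and $\vee$ denotes the join. A vertex split on a vertex $v$ of $H$ replaces $v$ by an independent set of $d(v)$ new vertices, each adjacent to exactly one vertex of $N_H(v)$, distinct new vertices adjacent to distinct neighbours; a vertex split on $U\subseteq V(H)$ applies this to the vertices of $U$ one by one. The splitting family $\mathcal{H}(H)$ is the family of all graphs obtained from $H$ by a vertex split on some $U\subseteq V(H)$. *)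

(* Defs.v *)
From mathcomp Require Import all_boot.
Set Implicit Arguments. Unset Strict Implicit. Unset Printing Implicit Defensive.

Section Graphs.
Variable V : finType.
Implicit Types (e : rel V) (U A B S : {set V}).

Definition deg e (x : V) : nat := #|[set y | e x y]|.

Definition connected e : Prop := forall x y : V, connect e x y.
Definition acyclic e : Prop :=
  forall p : seq V, uniq p -> 3 <= size p -> ~~ cycle e p.
Definition is_tree e : Prop := [/\ 0 < #|V|, connected e & acyclic e].

Definition colour_classes e A B : Prop :=
  [/\ A :&: B = set0, A :|: B = setT &
      forall x y, e x y -> (x \in A) = (y \in B)].

Definition vcover e S : bool :=
  [forall x, forall y, e x y ==> (x \in S) || (y \in S)].
Definition beta e : nat :=
  \big[minn/#|V|]_(S : {set V} | vcover e S) #|S|.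

(* Vertex split on U (closed form of splitting the vertices of U one by one):
   vertices: inl x for x not in U, and inr (u,w) for u in U and w a neighbour
   of u (the new vertex of the split of u attached to w). *)
Definition split_vert e U (p : V + (V * V)) : bool :=
  match p with
  | inl x => x \notin U
  | inr (u, w) => (u \in U) && e u w
  end.
Definition split_type e U := {p : V + (V * V) | split_vert e U p}.
Definition rep U (x y : V) : V + (V * V) :=
  if x \in U then inr (x, y) else inl x.
Definition split_rel e U : rel (split_type e U) :=
  fun p q => [exists x, exists y,
    [&& e x y, val p == rep U x y & val q == rep U y x]].
End Graphs.

Definition join_type (k m : nat) := ('I_k + 'I_m)%type.
Definition join_rel (k m : nat) : rel (join_type k m) :=
  fun p q => match p, q with
  | inl i, inl j => i != j
  | inl _, inr _ => true
  | inr _, inl _ => true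
  | inr _, inr _ => false
  end.

Definition subgraph_of (W X : finType) (r : rel W) (s : rel X) : Prop :=
  exists f : W -> X, injective f /\ forall x y, r x y -> s (f x) (f y).

Arguments split_rel {V} e U _ _.
Arguments split_vert {V} e U p.
Arguments split_type {V} e U.
Arguments rep {V} U x y.
Arguments beta {V} e.
Arguments deg {V} e x.
Arguments join_rel : clear implicits.
Arguments subgraph_of {W X} r s.

(* Main.v *)
Require Import Defs.
From mathcomp Require Import all_boot.
From mathcomp Require Import zify.
Set Implicit Arguments. Unset Strict Implicit. Unset Printing Implicit Defensive.

Lemma path_parity (V : finType) (e : rel V) (A : {set V}) :
  (forall x y, e x y -> (x \in A) = ~~ (y \in A)) ->
  forall p x, path e x p -> (last x p \in A) = (x \in A) (+) odd (size p).
Proof.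
move=> bip; elim=> [|y p IH] x /=; first by rewrite addbF.
case/andP=> exy hp; rewrite IH // (bip _ _ exy).
by case: (y \in A); case: (odd (size p)).
Qed.

Lemma path_restrict (T : eqType) (e : rel T) (v : T) x p :
  path e x p -> v \notin x :: p ->
  path [rel a b | [&& e a b, a != v & b != v]] x p.
Proof.
elim: p x => [|y p IH] x //=.
case/andP=> exy hp; rewrite !in_cons !negb_or => /and3P [hx hy hp'].
rewrite exy (eq_sym x) hx (eq_sym y) hy /=; apply: IH => //.
by rewrite in_cons negb_or hy.
Qed.

Lemma path_avoid (T : eqType) (e : rel T) v x q :
  path [rel a b | [&& e a b, a != v & b != v]] x q -> v \notin q.
Proof.
elim: q x => [|y q IH] x //= /andP [/and3P [_ _ hy] hq].
by rewrite in_cons negb_or eq_sym hy (IH y).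
Qed.

Lemma tree_match (V : finType) (e : rel V) (A : {set V}) :
  symmetric e -> connected e -> acyclic e ->
  (forall x y, e x y -> (x \in A) = ~~ (y \in A)) ->
  (forall x, x \in A -> 2 <= deg e x) -> 0 < #|V| ->
  exists f : V -> V, {in A &, injective f} /\ forall a, a \in A -> e a (f a).
Proof.
move=> hsym hconn hacyc bip hdeg /card_gt0P [r _].
pose P v n := [exists p : n.-tuple V, path e r p && (last r p == v)].
have hex : forall v, exists n, P v n.
  move=> v; case/connectP: (hconn r v) => p hp hl; exists (size p).
  by apply/existsP; exists (in_tuple p); rewrite /= hp -hl eqxx.
pose d v := ex_minn (hex v).
have mkP : forall p, path e r p -> d (last r p) <= size p.
  move=> p hp; rewrite /d; case: ex_minnP => m _; apply.
  by apply/existsP; exists (in_tuple p); rewrite /= hp eqxx.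
have getP : forall v, exists p, [/\ path e r p, last r p = v & size p = d v].
  move=> v; rewrite /d; case: ex_minnP => m /existsP [t /andP [hp /eqP hl]] _.
  by exists t; rewrite size_tuple.
have donp : forall p, path e r p -> forall x, x \in r :: p -> d x <= size p.
  move=> p hp x; rewrite in_cons; case/orP => [/eqP -> | hx].
    by have := mkP [::] erefl; rewrite /= leqn0 => /eqP ->.
  move: hp; case/splitPr: hx => p1 p2; rewrite cat_path /= => /andP [h1 /andP [h2 _]].
  have := mkP (rcons p1 x); rewrite rcons_path h1 h2 last_rcons size_rcons size_cat /=.
  move=> /(_ isT) H; lia.
have D1 : forall u v, e u v -> d v <= (d u).+1.
  move=> u v euv; have [p [hp hl hs]] := getP u.
  by have := mkP (rcons p v); rewrite rcons_path hp hl euv last_rcons size_rcons hs; apply.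
have par : forall v, (v \in A) = (r \in A) (+) odd (d v).
  move=> v; have [p [hp hl hs]] := getP v.
  by rewrite -hs -hl (path_parity bip hp).
have Dne : forall a c, e a c -> d a != d c.
  move=> a c eac; apply/negP => /eqP h; have := bip _ _ eac.
  by rewrite (par a) (par c) h; case: (r \in A); case: (odd (d c)).
have D3 : forall u u' v, e u v -> e u' v -> (d u).+1 = d v -> (d u').+1 = d v -> u = u'.
  move=> u u' v euv euv' hu hu'; case: (eqVneq u u') => // neq; exfalso.
  pose e' := [rel a b | [&& e a b, a != v & b != v]].
  have syme' : symmetric e'.
    by move=> a b /=; rewrite hsym; congr andb; exact: andbC.
  have connr : forall w, (d w).+1 = d v -> connect e' r w.
    move=> w hw; have [p [hp hl hs]] := getP w.
    apply/connectP; exists p => //; apply: path_restrict => //.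
    apply/negP => /(donp _ hp); rewrite hs -hw; by rewrite ltnn.
  have : connect e' u u'.
    apply: connect_trans (connr _ hu'); by rewrite (sym_connect_sym syme') connr.
  case/connectP => p hp hl; subst u'.
  move: neq euv'; case: (shortenP hp) => q hq uq _ neq ev.
  have uv : u != v by apply/negP => /eqP huv; move: hu; rewrite huv; lia.
  have qn : q != [::] by apply: contraNneq neq => ->.
  have := hacyc (v :: u :: q); rewrite /= rcons_path.
  rewrite (sub_path _ hq); last by move=> a b /and3P [].
  rewrite hsym euv ev /=; move: uq; rewrite /= => /andP [uq1 uq2].
  rewrite uq1 uq2 in_cons negb_or eq_sym uv (path_avoid hq) /=.
  move: qn; clear; case: q => // y q _ H; by have := H isT isT.
pose f a := odflt a [pick c | e a c && (d c == (d a).+1)].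
have fP : forall a, a \in A -> e a (f a) && (d (f a) == (d a).+1).
  move=> a ha; rewrite /f; case: pickP => [c //| none]; exfalso.
  move: (hdeg a ha); rewrite /deg; case/card_gt1P => c1 [c2 [h1 h2 n12]].
  move: h1 h2; rewrite !inE => h1 h2.
  have cases : forall c, e a c -> (d c).+1 = d a.
    move=> c hc; have := none c; rewrite hc /= => /negbT hn.
    have := D1 _ _ hc; have := D1 _ _ (eq_ind _ _ hc _ (hsym a c)); have := Dne _ _ hc.
    move: hn; lia.
  have e1 : e c1 a by rewrite hsym.
  have e2 : e c2 a by rewrite hsym.
  by move: n12; rewrite (D3 c1 c2 a e1 e2 (cases _ h1) (cases _ h2)) eqxx.
exists f; split; last by move=> a /fP /andP [].
move=> a b ha hb hab; have /andP [ea da] := fP a ha; have /andP [eb db] := fP b hb.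
apply: (D3 a b (f a)) => //; first by rewrite hab.
  by apply/esym/eqP.
by rewrite hab; apply/esym/eqP.
Qed.

Lemma cover_bound (V W : finType) (A : {set V}) (u w : V -> W) (P : pred W) :
  {in A &, injective u} -> {in A &, injective w} ->
  (forall a b, a \in A -> b \in A -> u a != w b) ->
  (forall a, a \in A -> P (u a) || P (w a)) -> #|A| <= #|[set x | P x]|.
Proof.
move=> iu iw uw hP.
pose g a := if P (u a) then u a else w a.
have ig : {in A &, injective g}.
  move=> a b ha hb; rewrite /g.
  case: ifP => pa; case: ifP => pb.
  - exact: iu.
  - by move=> h; move: (uw a b ha hb); rewrite h eqxx.
  - by move=> h; move: (uw b a hb ha); rewrite h eqxx.
  - exact: iw.
rewrite -(card_in_imset ig); apply: subset_leq_card; apply/subsetP => _ /imsetP [a ha ->].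
rewrite inE /g; case: ifP => // pa; by have := hP a ha; rewrite pa.
Qed.

Lemma bigmin_le (I : eqType) (s : seq I) (P : pred I) (F : I -> nat) x0 i :
  i \in s -> P i -> \big[minn/x0]_(j <- s | P j) F j <= F i.
Proof.
elim: s => [|j s IH] //; rewrite in_cons big_cons => /orP [/eqP <- -> | hi hP].
  exact: geq_minl.
case: ifP => _; last exact: IH.
by rewrite geq_min IH ?orbT.
Qed.

Definition rfst (V : Type) (p : V + V * V) : V :=
  match p with inl x => x | inr (x, _) => x end.

Lemma rfst_rep (V : finType) (U : {set V}) x y : rfst (rep U x y) = x.
Proof. by rewrite /rep; case: ifP. Qed.

Theorem lemma2p4 (V : finType) (e : rel V) (A B : {set V}) :
  symmetric e -> irreflexive e -> is_tree e ->
  colour_classes e A B -> #|A| <= #|B| ->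
  (forall x, x \in A -> 2 <= deg e x) ->
  [/\ beta e = #|A|,
      (forall U : {set V}, #|A| <= beta (split_rel e U)) &
      (0 < #|A| -> forall m : nat, 1 <= m -> forall U : {set V},
         ~ subgraph_of (split_rel e U) (join_rel (#|A| - 1) m))].
Proof.
move=> hsym hirr [hV hconn hacyc] [hI hU hcol] _ hdeg.
have inB : forall y, (y \in B) = (y \notin A).
  move=> y; have := congr1 (fun S : {set V} => y \in S) hI; have := congr1 (fun S : {set V} => y \in S) hU; rewrite /= !inE.
  by case: (y \in A); case: (y \in B).
have bip : forall x y, e x y -> (x \in A) = ~~ (y \in A).
  by move=> x y exy; rewrite (hcol _ _ exy) inB.
have [f [finj fe]] := tree_match hsym hconn hacyc bip hdeg hV.
have fA : forall a, a \in A -> f a \notin A.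
  by move=> a ha; rewrite -(bip _ _ (fe a ha)).
have splitb : forall U (W : finType) (phi : split_type e U -> W) (P : pred W),
    injective phi -> (forall p q, split_rel e U p q -> P (phi p) || P (phi q)) ->
    #|A| <= #|[set x | P x]|.
  move=> U W phi P iphi hP.
  case: (set_0Vmem A) => [-> | [a0 ha0]]; first by rewrite cards0.
  have ok : forall x y, e x y -> split_vert e U (rep U x y).
    by move=> x y exy; rewrite /rep; case: ifP => hx /=; [rewrite hx exy | rewrite hx].
  pose d0 : split_type e U := Sub (rep U a0 (f a0)) (ok _ _ (fe a0 ha0)).
  pose us a : split_type e U := insubd d0 (rep U a (f a)).
  pose ws a : split_type e U := insubd d0 (rep U (f a) a).
  have vus : forall a, a \in A -> val (us a) = rep U a (f a).
    by move=> a ha; rewrite /us val_insubd (ok _ _ (fe a ha)).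
  have vws : forall a, a \in A -> val (ws a) = rep U (f a) a.
    by move=> a ha; rewrite /ws val_insubd ok // hsym fe.
  apply: (cover_bound (u := phi \o us) (w := phi \o ws)).
  - move=> a b ha hb /= /iphi /(congr1 (fun p => rfst (val p))).
    by rewrite !vus // !rfst_rep.
  - move=> a b ha hb /= /iphi /(congr1 (fun p => rfst (val p))).
    by rewrite !vws // !rfst_rep => /finj; apply.
  - move=> a b ha hb /=; apply/negP => /eqP /iphi /(congr1 (fun p => rfst (val p))).
    rewrite vus // vws // !rfst_rep => hab; move: (fA b hb); by rewrite -hab ha.
  - move=> a ha /=; apply: hP; apply/existsP; exists a; apply/existsP; exists (f a).
    by rewrite fe // vus // vws // !eqxx.
have vcA : vcover e A.
  apply/forallP => x; apply/forallP => y; apply/implyP => exy.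
  by rewrite (bip _ _ exy); case: (y \in A).
split.
- apply/eqP; rewrite eqn_leq; apply/andP; split.
    by rewrite /beta; apply: bigmin_le => //; exact: mem_index_enum.
  rewrite /beta; apply: (big_ind (fun n => #|A| <= n)).
  + exact: max_card.
  + by move=> x y hx hy; rewrite leq_min hx hy.
  move=> S hS.
  have -> : S = [set x | x \in S] by apply/setP => x; rewrite inE.
  apply: (cover_bound (u := id) (w := f)) => //.
  + by move=> a b ha hb /=; apply/negP => /eqP hab; move: (fA b hb); rewrite -hab ha.
  + move=> a ha /=; move/forallP: hS => /(_ a) /forallP /(_ (f a)) /implyP; apply.
    exact: fe.
- move=> U; rewrite /beta; apply: (big_ind (fun n => #|A| <= n)).
  + apply: leq_trans (max_card [set x : split_type e U | predT x]).
    by apply: (splitb U _ id predT).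
  + by move=> x y hx hy; rewrite leq_min hx hy.
  move=> S hS.
  have -> : S = [set x | x \in S] by apply/setP => x; rewrite inE.
  apply: (splitb U _ id) => // p q epq /=.
  by move/forallP: hS => /(_ p) /forallP /(_ q) /implyP; apply.
- move=> hA m hm U [phi [iphi hphi]].
  have := splitb U _ phi (fun p : join_type _ _ => if p is inl _ then true else false) iphi.
  have -> : [set x : join_type (#|A| - 1) m | if x is inl _ then true else false]
            = inl @: [set: 'I_(#|A| - 1)].
    apply/setP => [[i|i]]; rewrite !inE.
      by apply/esym/imsetP; exists i.
    by apply/esym/imsetP => [[j _]].
  rewrite card_imset; last by move=> ? ? [].
  rewrite cardsT card_ord.
  have H : forall p q, split_rel e U p q ->
     (if phi p is inl _ then true else false) || (if phi q is inl _ then true else false).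
    by move=> p q /hphi; case: (phi p) => ?; case: (phi q) => ?.
  move=> /(_ H); lia.
Qed.
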